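(* Let $(X,\to,d_A)$ be a metric transition system over $A$, let $d_0\in\mathit{DPMet}(X)$, and define $\beta_{d_0}\colon\mathit{DPMet}(\mathcal P(X))\to\mathit{DPMet}(\mathcal P(X))$ by $\beta_{d_0}(d)=\beta_T(d)\vee(d_0)_{\overrightarrow H}$. Then for all $X_1,X_2\subseteq X$, the least fixpoint satisfies: $\mu\beta_{d_0}(X_1,X_2)$ is the infimum of those $\varepsilon\in[0,1]$ such that for all $x_1\in X_1$, all $x_1'$ and all $\sigma\in A^*$ with $x_1\xrightarrow{\sigma}x_1'$ there exist $x_2\in X_2$, $x_2'$ and $\tau\in A^*$ with $x_2\xrightarrow{\tau}x_2'$, $d_{\mathrm{Tr}}(\sigma,\tau)\le\varepsilon$ and $d_0(x_1',x_2')\le\varepsilon$.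
   Context: A metric transition system over $A$ is $(X,\to,d_A)$ with $\to\subseteq X\times A\times X$ and a metric $d_A\colon A\times A\to[0,1]$; $x\xrightarrow{\sigma}x'$ denotes a path labelled $\sigma$. $r\oplus s=\min\{r+s,1\}$, $r\ominus s=\max\{0,r-s\}$; $\bigvee\emptyset=0$, $\bigwedge\emptyset=1$. $\mathit{DPMet}(Y)$: directed pseudo-metrics $d\colon Y\times Y\to[0,1]$ ($d(y,y)=0$, $d(x,z)\le d(x,y)\oplus d(y,z)$), ordered pointwise; least fixpoints are taken in this lattice. $d_{\overrightarrow H}(U,V)=\bigvee_{u\in U}\bigwedge_{v\in V}d(u,v)$. $d_{\mathrm{Tr}}(\sigma_1,\sigma_2)=1$ if lengths differ, $d_{\mathrm{Tr}}(\varepsilon,\varepsilon)=0$, $d_{\mathrm{Tr}}(a_1\sigma_1',a_2\sigma_2')=\max\{d_A(a_1,a_2),d_{\mathrm{Tr}}(\sigma_1',\sigma_2')\}$. $\bigcirc_af(x)=\bigvee\{(1-d_A(b,a))\land f(x')\mid x\xrightarrow{b}x'\}$; $\tilde f(Y)=\bigvee_{x\in Y}f(x)$; $\alpha_T(\mathcal F)(X_1,X_2)=\bigvee_{f\in\mathcal F}(\tilde f(X_1)\ominus\tilde f(X_2))$; $\gamma_T(d)=\{f\in[0,1]^X\mid\forall X_1,X_2\colon\tilde f(X_1)\ominus\tilde f(X_2)\le d(X_1,X_2)\}$; $\mathit{lo}_T(\mathcal F)=\bigcup_{a\in A}\{\bigcirc_af\mid f\in\mathrm{cl}^{\mathrm{sh}}(\mathcal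 F)\}\cup\{1\}$ with $\mathrm{cl}^{\mathrm{sh}}$ the closure under shifts $f\mapsto f\ominus c$, $f\mapsto f\oplus c$; $\beta_T=\alpha_T\circ\mathit{lo}_T\circ\gamma_T$. *)

(* Defs.v *)
From HB Require Import structures.
From mathcomp Require Import all_boot all_order all_algebra.
From mathcomp Require Import all_classical all_reals.
Set Implicit Arguments. Unset Strict Implicit. Unset Printing Implicit Defensive.
Import Order.TTheory GRing.Theory Num.Theory.
Local Open Scope classical_set_scope.
Local Open Scope ring_scope.

Section Defs.
Variable R : realType.

Definition tadd (r s : R) : R := Num.min (r + s) 1.
Definition tsub (r s : R) : R := Num.max 0 (r - s).

(* Join / meet of subsets of [0,1] with the conventions
   \/ empty = 0 and /\ empty = 1. *)
Definition bigsup (S : set R) : R := sup (S `|` [set 0]).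
Definition biginf (S : set R) : R := inf (S `|` [set 1]).

Definition is_dpmet (Y : Type) (d : Y -> Y -> R) : Prop :=
  (forall x y, 0 <= d x y <= 1) /\
  (forall y, d y y = 0) /\
  (forall x y z, d x z <= tadd (d x y) (d y z)).

Definition is_metric01 (A : Type) (d : A -> A -> R) : Prop :=
  (forall a b, 0 <= d a b <= 1) /\
  (forall a b, d a b = 0 <-> a = b) /\
  (forall a b, d a b = d b a) /\
  (forall a b c, d a c <= d a b + d b c).

Variables (X A : Type) (trans : X -> A -> X -> Prop) (dA : A -> A -> R).

Inductive path : X -> seq A -> X -> Prop :=
| path_nil x : path x [::] x
| path_cons x a y s z : trans x a y -> path y s z -> path x (a :: s) z.

Fixpoint dTr (s1 s2 : seq A) : R :=
  match s1, s2 with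
  | [::], [::] => 0
  | a1 :: s1', a2 :: s2' => Num.max (dA a1 a2) (dTr s1' s2')
  | _, _ => 1
  end.

Definition dHaus (Y : Type) (d : Y -> Y -> R) (U V : set Y) : R :=
  bigsup [set r | exists2 u, U u & r = biginf [set d u v | v in V]].

Definition nextop (a : A) (f : X -> R) (x : X) : R :=
  bigsup [set r | exists b x', trans x b x' /\ r = Num.min (1 - dA b a) (f x')].

Definition lift (f : X -> R) (Y : set X) : R := bigsup (f @` Y).

Definition alphaT (F : set (X -> R)) (X1 X2 : set X) : R :=
  bigsup [set tsub (lift f X1) (lift f X2) | f in F].

Definition gammaT (d : set X -> set X -> R) : set (X -> R) :=
  [set f | (forall x, 0 <= f x <= 1) /\
           forall X1 X2, tsub (lift f X1) (lift f X2) <= d X1 X2].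

Inductive clsh (F : set (X -> R)) : (X -> R) -> Prop :=
| clsh_base f : F f -> clsh F f
| clsh_sub f c : clsh F f -> 0 <= c <= 1 -> clsh F (fun x => tsub (f x) c)
| clsh_add f c : clsh F f -> 0 <= c <= 1 -> clsh F (fun x => tadd (f x) c).

Definition loT (F : set (X -> R)) : set (X -> R) :=
  [set g | (exists a f, clsh F f /\ g = nextop a f) \/ g = (fun _ => 1)].

Definition betaT (d : set X -> set X -> R) : set X -> set X -> R :=
  alphaT (loT (gammaT d)).

Definition beta_d0 (d0 : X -> X -> R) (d : set X -> set X -> R)
  : set X -> set X -> R :=
  fun X1 X2 => Num.max (betaT d X1 X2) (dHaus d0 X1 X2).

Definition is_lfp (phi : (set X -> set X -> R) -> (set X -> set X -> R))
  (d : set X -> set X -> R) : Prop :=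
  is_dpmet d /\ phi d = d /\
  forall d', is_dpmet d' -> phi d' = d' -> forall X1 X2, d X1 X2 <= d' X1 X2.

Definition eps_set (d0 : X -> X -> R) (X1 X2 : set X) : set R :=
  [set e | 0 <= e <= 1 /\
     forall x1 x1' s, X1 x1 -> path x1 s x1' ->
       exists x2 x2' t, [/\ X2 x2, path x2 t x2', dTr s t <= e & d0 x1' x2' <= e]].

End Defs.

(* Main.v *)
Require Import Defs.
From HB Require Import structures.
From mathcomp Require Import all_boot all_order all_algebra.
From mathcomp Require Import all_classical all_reals.
From mathcomp Require Import ring lra.
Import Order.TTheory GRing.Theory Num.Theory.
Local Open Scope classical_set_scope.
Local Open Scope ring_scope.
Set Implicit Arguments. Unset Strict Implicit. Unset Printing Implicit Defensive.

Section Tool.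
Variable R : realType.
Implicit Types S : set R.

Lemma bigsup_ub S x : (forall y, S y -> y <= 1) -> S x -> x <= bigsup S.
Proof.
move=> hS Sx; apply: ub_le_sup; last by left.
exists 1 => y [/hS //|->//].
Qed.

Lemma bigsup_ge0 S : (forall y, S y -> y <= 1) -> 0 <= bigsup S.
Proof.
move=> hS; apply: ub_le_sup; last by right.
exists 1 => y [/hS //|->//].
Qed.

Lemma bigsup_le S c : 0 <= c -> (forall y, S y -> y <= c) -> bigsup S <= c.
Proof.
move=> c0 hS; apply: ge_sup; first by exists 0; right.
by move=> y [/hS //|->].
Qed.

Lemma bigsup_gt S c : 0 <= c -> c < bigsup S -> exists2 y, S y & c < y.
Proof.
move=> c0 lt; have [//|hn] := pselect (exists2 y, S y & c < y).
have : bigsup S <= c.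
  apply: bigsup_le => // y Sy; rewrite leNgt; apply/negP => cy.
  by apply: hn; exists y.
by rewrite leNgt lt.
Qed.

Lemma biginf_lb S x : (forall y, S y -> 0 <= y) -> S x -> biginf S <= x.
Proof.
move=> hS Sx; apply: ge_inf; last by left.
exists 0 => y [/hS //|->//].
Qed.

Lemma biginf_le1 S : (forall y, S y -> 0 <= y) -> biginf S <= 1.
Proof.
move=> hS; apply: ge_inf; last by right.
exists 0 => y [/hS //|->//].
Qed.

Lemma biginf_ge S c : c <= 1 -> (forall y, S y -> c <= y) -> c <= biginf S.
Proof.
move=> c1 hS; apply: lb_le_inf; first by exists 1; right.
by move=> y [/hS //|->].
Qed.

Lemma biginf_ge0 S : (forall y, S y -> 0 <= y) -> 0 <= biginf S.
Proof. by move=> hS; apply: biginf_ge. Qed.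

Lemma biginf_lt S c : c <= 1 -> biginf S < c -> exists2 y, S y & y < c.
Proof.
move=> c1 /inf_lt [].
  by exists 1; right.
move=> y [Sy|->] yc; first by exists y.
by move: (lt_le_trans yc c1); rewrite ltxx.
Qed.

Lemma le_from_above (x m : R) : x <= 1 ->
  (forall e, m < e -> e <= 1 -> x <= e) -> x <= m.
Proof.
move=> x1 h; case: (leP 1 m) => [m1|m1]; first exact: le_trans x1 m1.
apply/ler_addgt0Pr => eps eps0.
apply: le_trans (h (Num.min (m + eps) 1) _ _) _.
- by rewrite lt_min m1 ltrDl eps0.
- by rewrite ge_min lexx orbT.
- by rewrite ge_min lexx.
Qed.


Lemma maxP' (x y : R) : (x <= y /\ Num.max x y = y) \/ (y <= x /\ Num.max x y = x).
Proof. case: (leP x y) => h; [left; split; rewrite ?max_r // | right; split; rewrite ?max_l ?ltW //]. Qed.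
Lemma minP' (x y : R) : (x <= y /\ Num.min x y = x) \/ (y <= x /\ Num.min x y = y).
Proof. case: (leP x y) => h; [left; split; rewrite ?min_l // | right; split; rewrite ?min_r ?ltW //]. Qed.

Lemma tsub_le (a b c : R) : 0 <= c -> a <= b + c -> tsub a b <= c.
Proof. move=> c0 h; rewrite /tsub ge_max c0 /=; lra. Qed.
Lemma tsub_ge (a b : R) : a - b <= tsub a b.
Proof. by rewrite /tsub le_max lexx orbT. Qed.
Lemma tsub_ge0 (a b : R) : 0 <= tsub a b.
Proof. by rewrite /tsub le_max lexx. Qed.
Lemma tsub_le1 (a b : R) : a <= 1 -> 0 <= b -> tsub a b <= 1.
Proof. move=> h1 h2; apply: tsub_le => //; lra. Qed.
Lemma tadd_le (a b : R) : tadd a b <= a + b.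
Proof. by rewrite /tadd ge_min lexx. Qed.
End Tool.

Section Main.
Variables (R : realType) (X A : Type) (trans : X -> A -> X -> Prop)
  (dA : A -> A -> R) (d0 : X -> X -> R).
Hypothesis hdA : is_metric01 dA.
Hypothesis hd0 : is_dpmet d0.

Local Notation pth := (@Defs.path X A trans).
Local Notation dT := (dTr dA).
Local Notation BT := (betaT trans dA).
Local Notation B0 := (beta_d0 trans dA d0).
Local Notation dH := (dHaus d0).
Local Notation lft := (@Defs.lift R X).

Lemma dA01 a b : 0 <= dA a b <= 1. Proof. by case: hdA. Qed.
Lemma dA0 a : dA a a = 0. Proof. by case: hdA => _ [h _]; apply/h. Qed.
Lemma dAsym a b : dA a b = dA b a. Proof. by case: hdA => _ [_ []]. Qed.
Lemma dAtri a b c : dA a c <= dA a b + dA b c. Proof. by case: hdA => _ [_ [_]]. Qed.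
Lemma d001 x y : 0 <= d0 x y <= 1. Proof. by case: hd0. Qed.
Lemma d00 x : d0 x x = 0. Proof. by case: hd0 => _ []. Qed.
Lemma d0tri x y z : d0 x z <= tadd (d0 x y) (d0 y z). Proof. by case: hd0 => _ []. Qed.

Lemma path_nilI x y : pth x [::] y -> x = y. Proof. by inversion 1. Qed.
Lemma path_consI x a s y : pth x (a :: s) y -> exists z, trans x a z /\ pth z s y.
Proof. by inversion 1; subst; eexists; split; eauto. Qed.

Lemma dTr01 s t : 0 <= dT s t <= 1.
Proof.
elim: s t => [|a s IH] [|b t] //=; rewrite ?lexx ?ler01 //.
move: (dA01 a b) (IH t) => /andP[h1 h2] /andP[h3 h4].
by rewrite le_max ge_max h1 h2 h4.
Qed.
Lemma dTr_refl s : dT s s = 0.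
Proof. by elim: s => //= a s ->; rewrite dA0 maxxx. Qed.

Lemma dTr_tri s t u : dT s u <= dT s t + dT t u.
Proof.
elim: s t u => [|a s IH] [|b t] [|c u] /=; rewrite ?addr0 ?add0r ?lexx ?ler01 //.
- lra.
- by move: (dA01 b c) (dTr01 t u) => /andP[? ?] /andP[? ?];
    case: (maxP' (dA b c) (dT t u)) => [[_ ->]|[_ ->]]; lra.
- by move: (dA01 a c) (dTr01 s u) => /andP[? ?] /andP[? ?];
    case: (maxP' (dA a c) (dT s u)) => [[_ ->]|[_ ->]]; lra.
- by move: (dA01 a b) (dTr01 s t) => /andP[? ?] /andP[? ?];
    case: (maxP' (dA a b) (dT s t)) => [[_ ->]|[_ ->]]; lra.
- have h1 := dAtri a b c; have h2 := IH t u.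
  have h3 : dA a b <= Num.max (dA a b) (dT s t) by rewrite le_max lexx.
  have h4 : dT s t <= Num.max (dA a b) (dT s t) by rewrite le_max lexx orbT.
  have h5 : dA b c <= Num.max (dA b c) (dT t u) by rewrite le_max lexx.
  have h6 : dT t u <= Num.max (dA b c) (dT t u) by rewrite le_max lexx orbT.
  rewrite ge_max; apply/andP; split; lra.
Qed.


Definition Pm (S T : set X) (e : R) := forall x1 x1' s, S x1 -> pth x1 s x1' ->
  exists x2 x2' t, [/\ T x2, pth x2 t x2', dT s t <= e & d0 x1' x2' <= e].
Definition D (S T : set X) : R := biginf (eps_set trans dA d0 S T).

Lemma eps_ge0 S T y : eps_set trans dA d0 S T y -> 0 <= y.
Proof. by case=> /andP[]. Qed.

Lemma D01 S T : 0 <= D S T <= 1.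
Proof.
by rewrite biginf_ge0 ?biginf_le1 //; apply: eps_ge0.
Qed.

Lemma Pm_mono S T e e' : e <= e' -> Pm S T e -> Pm S T e'.
Proof.
move=> ee' h x1 x1' s Sx p; have [x2 [x2' [t [? ? h1 h2]]]] := h x1 x1' s Sx p.
by exists x2, x2', t; split => //; apply: le_trans ee'.
Qed.

Lemma D_le S T e : 0 <= e <= 1 -> Pm S T e -> D S T <= e.
Proof. move=> he hP; apply: biginf_lb; [exact: eps_ge0 | by split]. Qed.

Lemma D_lt S T e : e <= 1 -> D S T < e -> Pm S T e.
Proof.
move=> e1 /(biginf_lt e1) [y [_ hy] ye].
by apply: Pm_mono hy; apply: ltW.
Qed.

Lemma D_refl S : D S S = 0.
Proof.
apply/le_anti; rewrite (proj1 (andP (D01 S S))) andbT.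
apply: D_le; first by rewrite lexx ler01.
move=> x1 x1' s Sx p; exists x1, x1', s; split => //.
  by rewrite dTr_refl.
by rewrite d00.
Qed.

Lemma D_tri S T U : D S U <= tadd (D S T) (D T U).
Proof.
rewrite /tadd le_min (proj2 (andP (D01 S U))) andbT.
apply/ler_addgt0Pr => eps e0.
move: (D01 S T) (D01 T U) (D01 S U) => /andP[? ?] /andP[? ?] /andP[? ?].
set e1 := D S T + eps / 2; set e2 := D T U + eps / 2.
have -> : D S T + D T U + eps = e1 + e2 by rewrite /e1 /e2; field.
case: (leP (e1 + e2) 1) => h; last by lra.
have h1 : Pm S T e1 by apply: D_lt; rewrite /e1 /e2 in h *; lra.
have h2 : Pm T U e2 by apply: D_lt; rewrite /e1 /e2 in h *; lra.
apply: D_le; first by (apply/andP; split => //; rewrite /e1 /e2; lra).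
move=> x1 x1' s Sx p.
have [x2 [x2' [t [Tx2 p2 hs hd]]]] := h1 x1 x1' s Sx p.
have [x3 [x3' [u [Ux3 p3 hs' hd']]]] := h2 x2 x2' t Tx2 p2.
exists x3, x3', u; split => //.
  by apply: le_trans (dTr_tri s t u) _; lra.
apply: le_trans (d0tri x1' x2' x3') _; apply: le_trans (tadd_le _ _) _; lra.
Qed.

Lemma D_mono1 S T s : S s -> D [set s] T <= D S T.
Proof.
move=> Ss; apply: biginf_ge; first by case/andP: (D01 [set s] T).
move=> y [hy hP]; apply: D_le => // x1 x1' σ /= -> p.
exact: hP Ss p.
Qed.

Lemma D_anti2 S T T' : T `<=` T' -> D S T' <= D S T.
Proof.
move=> TT'; apply: biginf_ge; first by case/andP: (D01 S T').
move=> y [hy hP]; apply: D_le => // x1 x1' σ Sx p.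
have [x2 [x2' [t [? ? ? ?]]]] := hP x1 x1' σ Sx p.
by exists x2, x2', t; split => //; apply: TT'.
Qed.

Lemma D_decomp T U : D T U <= bigsup [set D [set t] U | t in T].
Proof.
have hb : forall y, [set D [set t] U | t in T] y -> y <= 1.
  by move=> y [t _ <-]; case/andP: (D01 [set t] U).
apply: le_from_above; first by case/andP: (D01 T U).
move=> e he e1; apply: D_le.
  by rewrite e1 andbT; apply: le_trans (ltW he); apply: bigsup_ge0.
move=> x1 x1' s Tx p.
have h : D [set x1] U < e.
  by apply: le_lt_trans he; apply: bigsup_ub => //; exists x1.
exact: (D_lt e1 h) x1 x1' s erefl p.
Qed.

Lemma D_empty S T x : S x -> ~ (exists y, T y) -> D S T = 1.
Proof.
move=> Sx nT; apply/le_anti; rewrite (proj2 (andP (D01 S T))) /=.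
apply: biginf_ge => // y [_ hP].
have [x2 [_ [_ [Tx2 _ _ _]]]] := hP x x [::] Sx (path_nil trans x).
by case: nT; exists x2.
Qed.


Definition range01 (f : X -> R) := forall x, 0 <= f x <= 1.

Lemma lift_ub f Y x : range01 f -> Y x -> f x <= lft f Y.
Proof.
move=> hf Yx; apply: bigsup_ub; last by exists x.
by move=> y [z _ <-]; case/andP: (hf z).
Qed.

Lemma lift_le f Y c : 0 <= c -> (forall x, Y x -> f x <= c) -> lft f Y <= c.
Proof. by move=> c0 h; apply: bigsup_le => // y [z Yz <-]; apply: h. Qed.

Lemma lift_range f Y : range01 f -> 0 <= lft f Y <= 1.
Proof.
move=> hf; apply/andP; split; last by apply: lift_le => // x _; case/andP: (hf x).
by apply: bigsup_ge0 => y [z _ <-]; case/andP: (hf z).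
Qed.

Lemma lft1 f x : range01 f -> lft f [set x] = f x.
Proof.
move=> hf; apply/le_anti; rewrite lift_ub // andbT.
by apply: lift_le => [|y ->]; first by case/andP: (hf x).
Qed.

Lemma lift_empty f Y : ~ (exists y, Y y) -> lft f Y = 0.
Proof.
move=> nY; apply/le_anti; rewrite lift_le //=; last by move=> y Yy; case: nY; exists y.
by apply: bigsup_ge0 => y [z Yz _]; case: nY; exists z.
Qed.

Lemma lift_approx f Y eps : range01 f -> (exists y, Y y) -> 0 < eps ->
  exists2 y, Y y & lft f Y - eps < f y.
Proof.
move=> hf [y0 Y0] e0.
case: (leP 0 (lft f Y - eps)) => h.
  have hlt : lft f Y - eps < lft f Y by lra.
  have [z [y Yy <-] hz] := bigsup_gt h hlt.
  by exists y.
by exists y0 => //; apply: lt_le_trans h _; case/andP: (hf y0).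
Qed.


Lemma nextop_elem_le1 a f y : [set r | exists b x', trans y b x' /\
   r = Num.min (1 - dA b a) (f x')] `<=` [set r | r <= 1].
Proof.
move=> r [b [x' [_ ->]]] /=; rewrite ge_min; apply/orP; left.
by case/andP: (dA01 b a) => ? ?; lra.
Qed.

Lemma nextop_range a f : range01 (nextop trans dA a f).
Proof.
move=> x; apply/andP; split.
  by apply: bigsup_ge0 => y /nextop_elem_le1.
by apply: bigsup_le => // y /nextop_elem_le1.
Qed.

Lemma nextop_ge a f y b y' : trans y b y' ->
  Num.min (1 - dA b a) (f y') <= nextop trans dA a f y.
Proof.
move=> tr; apply: bigsup_ub; first by move=> r /nextop_elem_le1.
by exists b, y'.
Qed.

Lemma loT_range d g : loT trans dA (gammaT d) g -> range01 g.
Proof.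
case=> [[a [f [_ ->]]]|->]; first exact: nextop_range.
by move=> x; rewrite lexx ler01.
Qed.

Lemma alpha_elem d S T : [set tsub (lft g S) (lft g T) | g in loT trans dA (gammaT d)]
  `<=` [set r | 0 <= r <= 1].
Proof.
move=> r [g hg <-] /=; rewrite tsub_ge0 tsub_le1 //.
  by case/andP: (lift_range S (loT_range hg)).
by case/andP: (lift_range T (loT_range hg)).
Qed.

Lemma BT_ge d S T g : loT trans dA (gammaT d) g -> tsub (lft g S) (lft g T) <= BT d S T.
Proof.
move=> hg; apply: bigsup_ub; last by exists g.
by move=> y /alpha_elem /andP[].
Qed.

Lemma BT_le d S T c : 0 <= c ->
  (forall g, loT trans dA (gammaT d) g -> tsub (lft g S) (lft g T) <= c) -> BT d S T <= c.
Proof. by move=> c0 h; apply: bigsup_le => // y [g hg <-]; apply: h. Qed.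

Lemma BT_range d S T : 0 <= BT d S T <= 1.
Proof.
apply/andP; split; first by apply: bigsup_ge0 => y /alpha_elem /andP[].
by apply: bigsup_le => // y /alpha_elem /andP[].
Qed.

Definition inner u (T : set X) := biginf [set d0 u v | v in T].

Lemma inner_range u T : 0 <= inner u T <= 1.
Proof.
have h : forall y, [set d0 u v | v in T] y -> 0 <= y.
  by move=> y [v _ <-]; case/andP: (d001 u v).
by rewrite biginf_ge0 // biginf_le1.
Qed.

Lemma dH_ge u S T : S u -> inner u T <= dH S T.
Proof.
move=> Su; apply: bigsup_ub; last by exists u.
by move=> y [v _ ->]; case/andP: (inner_range v T).
Qed.

Lemma dH_le S T c : 0 <= c -> (forall u, S u -> inner u T <= c) -> dH S T <= c.
Proof. by move=> c0 h; apply: bigsup_le => // y [u Su ->]; apply: h. Qed.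

Lemma dH_range S T : 0 <= dH S T <= 1.
Proof.
apply/andP; split; last by apply: dH_le => // u _; case/andP: (inner_range u T).
by apply: bigsup_ge0 => y [v _ ->]; case/andP: (inner_range v T).
Qed.

Lemma dH_lt S T e x1 : e <= 1 -> dH S T < e -> S x1 -> exists2 v, T v & d0 x1 v < e.
Proof.
move=> e1 he Sx.
have : inner x1 T < e by apply: le_lt_trans he; apply: dH_ge.
by case/(biginf_lt e1) => y [v Tv <-] h; exists v.
Qed.

Lemma tsub_mono (a a' b : R) : a <= a' -> tsub a b <= tsub a' b.
Proof.
move=> h; rewrite /tsub ge_max le_max lexx /= le_max; apply/orP; right; lra.
Qed.
Lemma tsub_anti (a b b' : R) : b <= b' -> tsub a b' <= tsub a b.
Proof.
move=> h; rewrite /tsub ge_max le_max lexx /= le_max; apply/orP; right; lra.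
Qed.

Lemma BT_mono1 d S T s : S s -> BT d [set s] T <= BT d S T.
Proof.
move=> Ss; apply: BT_le; first by case/andP: (BT_range d S T).
move=> g hg; apply: le_trans (BT_ge S T hg); apply: tsub_mono.
by rewrite lft1 ?lift_ub //; apply: loT_range hg.
Qed.

Lemma BT_anti2 d S T T' : T `<=` T' -> BT d S T' <= BT d S T.
Proof.
move=> TT'; apply: BT_le; first by case/andP: (BT_range d S T).
move=> g hg; apply: le_trans (BT_ge S T hg); apply: tsub_anti.
apply: lift_le; first by case/andP: (lift_range T' (loT_range hg)).
by move=> x Tx; apply: lift_ub (TT' _ Tx); apply: loT_range hg.
Qed.

Lemma dH_mono1 S T s : S s -> dH [set s] T <= dH S T.
Proof.
move=> Ss; apply: dH_le; first by case/andP: (dH_range S T).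
by move=> u /= ->; apply: dH_ge.
Qed.

Lemma dH_anti2 S T T' : T `<=` T' -> dH S T' <= dH S T.
Proof.
move=> TT'; apply: dH_le; first by case/andP: (dH_range S T).
move=> u Su; apply: le_trans (dH_ge T Su).
apply: biginf_ge; first by case/andP: (inner_range u T').
move=> y [v Tv <-]; apply: biginf_lb; last by exists v => //; apply: TT'.
by move=> z [w _ <-]; case/andP: (d001 u w).
Qed.

Definition mono1 (d : set X -> set X -> R) := forall S T s, S s -> d [set s] T <= d S T.
Definition anti2 (d : set X -> set X -> R) := forall S T T', T `<=` T' -> d S T' <= d S T.
Definition decomp (d : set X -> set X -> R) :=
  forall T U, d T U <= bigsup [set d [set t] U | t in T].

Lemma max_le_max (a b c e : R) : a <= c -> b <= e -> Num.max a b <= Num.max c e.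
Proof.
move=> h1 h2; rewrite ge_max; apply/andP; split; rewrite le_max ?h1 //.
by rewrite h2 orbT.
Qed.

Section Fix.
Variable d : set X -> set X -> R.
Hypothesis hd : is_dpmet d.
Hypothesis hfix : B0 d = d.

Lemma fix_eq S T : d S T = Num.max (BT d S T) (dH S T).
Proof. by rewrite -{1}hfix. Qed.

Lemma fix_BT S T : BT d S T <= d S T.
Proof. by rewrite fix_eq le_max lexx. Qed.
Lemma fix_dH S T : dH S T <= d S T.
Proof. by rewrite fix_eq le_max lexx orbT. Qed.

Lemma fix_mono1 : mono1 d.
Proof.
move=> S T s Ss; rewrite !fix_eq; apply: max_le_max;
  [exact: BT_mono1 | exact: dH_mono1].
Qed.

Lemma fix_anti2 : anti2 d.
Proof.
move=> S T T' TT'; rewrite !fix_eq; apply: max_le_max;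
  [exact: BT_anti2 | exact: dH_anti2].
Qed.

Lemma d01 S T : 0 <= d S T <= 1.
Proof. by case: hd. Qed.

Lemma fix_decomp : decomp d.
Proof.
move=> T U.
set M := bigsup _.
have hb : forall y, [set d [set t] U | t in T] y -> y <= 1.
  by move=> y [t _ <-]; case/andP: (d01 [set t] U).
have M0 : 0 <= M by apply: bigsup_ge0.
have hM : forall t, T t -> d [set t] U <= M.
  by move=> t Tt; apply: bigsup_ub => //; exists t.
rewrite fix_eq ge_max; apply/andP; split.
  apply: BT_le => // g hg; apply: tsub_le => //.
  have gr := loT_range hg.
  have L0 : 0 <= lft g U by case/andP: (lift_range U gr).
  apply: lift_le; first by lra.
  move=> t Tt.
  have h1 := tsub_ge (lft g [set t]) (lft g U).
  have h2 := BT_ge [set t] U hg.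
  have h3 := fix_BT [set t] U.
  have h4 := hM t Tt.
  rewrite lft1 // in h1 h2; lra.
apply: dH_le => // u Tu.
apply: le_trans (@dH_ge u [set u] U erefl) _.
by apply: le_trans (fix_dH _ _) (hM u Tu).
Qed.

End Fix.

Lemma gamma_hU d U : is_dpmet d -> mono1 d -> decomp d ->
  gammaT d (fun w => d [set w] U).
Proof.
move=> hd hm hdc.
have d01' : forall S T, 0 <= d S T <= 1 by case: hd.
have dtri : forall S T V, d S V <= tadd (d S T) (d T V) by case: hd => _ [].
split => [x|S T]; first exact: d01'.
have hr : range01 (fun w => d [set w] U) by move=> w; exact: d01'.
apply: tsub_le; first by case/andP: (d01' S T).
apply: lift_le.
  by case/andP: (d01' S T) => ? _; case/andP: (lift_range T hr) => ? _; lra.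
move=> s Ss.
have h1 := dtri [set s] T U.
have h2 := tadd_le (d [set s] T) (d T U).
have h3 := hm S T s Ss.
have h4 := hdc T U.
have -> : lft (fun w => d [set w] U) T = bigsup [set d [set t] U | t in T] by [].
lra.
Qed.

Definition Tn (T : set X) b e :=
  [set y' | exists y b', [/\ T y, trans y b' y' & dA b' b <= e]].

Lemma step d S T e x1 b z : is_dpmet d -> mono1 d -> anti2 d -> decomp d ->
  0 <= e <= 1 -> S x1 -> trans x1 b z -> BT d S T < e -> d [set z] (Tn T b e) < e.
Proof.
move=> hd hm ha hdc /andP[e0 e1] Sx tr hBT.
rewrite ltNge; apply/negP => hz.
move: hBT; rewrite ltNge => /negP; apply.
have d01' : forall S T, 0 <= d S T <= 1 by case: hd.
have dref : forall S, d S S = 0 by case: hd => _ [].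
set h := fun w => d [set w] (Tn T b e).
set f := fun w => tadd (h w) (1 - e).
set g := nextop trans dA b f.
have hg : loT trans dA (gammaT d) g.
  left; exists b, f; split => //; apply: clsh_add; first by apply: clsh_base; apply: gamma_hU.
  apply/andP; split; lra.
have gr := loT_range hg.
apply: le_trans (BT_ge S T hg).
have hS : 1 <= lft g S.
  apply: le_trans (lift_ub gr Sx); apply: le_trans (@nextop_ge b f x1 b z tr).
  rewrite dA0 subr0 le_min lexx /= /f /tadd le_min lexx andbT; rewrite /h; lra.
have hT : lft g T <= 1 - e.
  apply: lift_le; first by lra.
  move=> y Ty; apply: bigsup_le; first by lra.
  move=> r [b' [y' [tr' ->]]].
  case: (leP (dA b' b) e) => hb.
    have hy' : h y' = 0.
      apply/le_anti; rewrite (proj1 (andP (d01' _ _))) andbT.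
      rewrite /h -(dref [set y']); apply: ha => w /= ->.
      by exists y, b'.
    rewrite ge_min; apply/orP; right; rewrite /f hy' /tadd add0r ge_min lexx //.
  rewrite ge_min; apply/orP; left; lra.
apply: le_trans (tsub_ge _ _); lra.
Qed.


Lemma D_dpmet : is_dpmet D.
Proof. split; first exact: D01. split; [exact: D_refl | exact: D_tri]. Qed.

Lemma tsub_empty f S T : range01 f -> ~ (exists y, T y) ->
  tsub (lft f S) (lft f T) <= D S T.
Proof.
move=> hf nT; rewrite (lift_empty _ nT).
case: (pselect (exists x, S x)) => [[x Sx]|nS].
  rewrite (D_empty Sx nT) tsub_le1 //; by case/andP: (lift_range S hf).
rewrite (lift_empty _ nS) /tsub subr0 maxxx; by case/andP: (D01 S T).
Qed.

Lemma phi_Q (phi : R -> R) f :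
  (forall a, 0 <= a <= 1 -> 0 <= phi a <= 1) ->
  (forall a b, 0 <= a <= 1 -> 0 <= b <= 1 -> a <= b -> phi a <= phi b) ->
  (forall a b, 0 <= a <= 1 -> 0 <= b <= 1 -> phi a - phi b <= tsub a b) ->
  range01 f -> (forall S T, tsub (lft f S) (lft f T) <= D S T) ->
  range01 (fun x => phi (f x)) /\
  (forall S T, tsub (lft (fun x => phi (f x)) S) (lft (fun x => phi (f x)) T) <= D S T).
Proof.
move=> P1 P2 P3 hf hQ.
have hr : range01 (fun x => phi (f x)) by move=> x; apply: P1.
split => // S T.
case: (pselect (exists y, T y)) => [hT|nT]; last exact: tsub_empty.
have LS := lift_range S hf; have LT := lift_range T hf.
have u1 : lft (fun x => phi (f x)) S <= phi (lft f S).
  apply: lift_le; first by case/andP: (P1 _ LS).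
  by move=> x Sx; apply: P2 => //; apply: lift_ub.
have u2 : phi (lft f T) <= lft (fun x => phi (f x)) T.
  apply/ler_addgt0Pr => eps e0.
  have [t Tt ht] := lift_approx hf hT e0.
  have := P3 (lft f T) (f t) LT (hf t).
  have := lift_ub hr Tt.
  have : tsub (lft f T) (f t) <= eps by apply: tsub_le (ltW e0) _; lra.
  lra.
have u3 := P3 _ _ LS LT.
have u4 := hQ S T.
have u5 := tsub_ge0 (lft f S) (lft f T).
apply: tsub_le; first by case/andP: (D01 S T).
lra.
Qed.

Lemma clsh_Q f : clsh (gammaT D) f ->
  range01 f /\ forall S T, tsub (lft f S) (lft f T) <= D S T.
Proof.
elim => [g [hr hn] | g c _ [hr hn] /andP[c0 c1] | g c _ [hr hn] /andP[c0 c1]].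
- by split.
- apply: (@phi_Q (fun a => tsub a c) g) => //.
  + by move=> a /andP[_ a1]; rewrite tsub_ge0 tsub_le1.
  + by move=> a b _ _ ab; apply: tsub_mono.
  + move=> a b /andP[? ?] /andP[? ?]; rewrite /tsub.
    case: (maxP' 0 (a - c)) => [[? ->]|[? ->]];
    case: (maxP' 0 (b - c)) => [[? ->]|[? ->]];
    case: (maxP' 0 (a - b)) => [[? ->]|[? ->]]; lra.
- apply: (@phi_Q (fun a => tadd a c) g) => //.
  + move=> a /andP[? ?]; rewrite /tadd le_min ge_min lexx orbT andbT /=.
    by apply/andP; split; lra.
  + move=> a b _ _ ab; rewrite /tadd le_min !ge_min lexx !orbT /= andbT.
    by apply/orP; left; lra.
  + move=> a b /andP[? ?] /andP[? ?]; rewrite /tadd /tsub.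
    case: (minP' (a + c) 1) => [[? ->]|[? ->]];
    case: (minP' (b + c) 1) => [[? ->]|[? ->]];
    case: (maxP' 0 (a - b)) => [[? ->]|[? ->]]; lra.
Qed.

Lemma nextop_Q a f : range01 f -> (forall S T, tsub (lft f S) (lft f T) <= D S T) ->
  forall S T, tsub (lft (nextop trans dA a f) S) (lft (nextop trans dA a f) T) <= D S T.
Proof.
move=> hf hQ S T.
set g := nextop trans dA a f.
have gr : range01 g := nextop_range a f.
have LgT := lift_range T gr; have LgS := lift_range S gr.
apply: le_from_above.
  by case/andP: LgS => _ ?; case/andP: LgT => ? _; apply: tsub_le1.
move=> e he e1.
have e0 : 0 <= e by apply: le_trans (ltW he); case/andP: (D01 S T).
case: (leP 1 e) => [e1'|elt1].
  apply: le_trans e1'; by case/andP: LgS => _ ?; case/andP: LgT => ? _; apply: tsub_le1.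
have hP := D_lt e1 he.
apply: tsub_le => //; apply: lift_le; first by case/andP: LgT => ? _; lra.
move=> x Sx; apply: bigsup_le; first by case/andP: LgT => ? _; lra.
move=> r [b [x' [tr ->]]].
set T' := Tn T b e.
have hP' : Pm [set x'] T' e.
  move=> y y' σ /= -> p.
  have [x2 [x2' [t [Tx2 p2 ht hd]]]] := hP x y' (b :: σ) Sx (path_cons tr p).
  case: t p2 ht => [|b' t] p2 ht /=; first by (simpl in ht; lra).
  move: ht; rewrite /= ge_max => /andP[hb ht].
  have [y2 [tr2 p3]] := path_consI p2.
  exists y2, x2', t; split => //.
  by exists x2, b'; split => //; rewrite dAsym.
have hD : D [set x'] T' <= e by apply: D_le => //; rewrite e0 e1.
have hfx : f x' <= lft f T' + e.
  have := hQ [set x'] T'; have := tsub_ge (lft f [set x']) (lft f T').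
  rewrite lft1 //; lra.
move: (dA01 b a) => /andP[? ?].
case: (pselect (exists y, T' y)) => [hT'|nT'].
  apply/ler_addgt0Pr => eps e0'.
  have [y' [y [b' [Ty tr' hb']]] hy'] := lift_approx hf hT' e0'.
  have h1 := @nextop_ge a f y b' y' tr'.
  have h2 := lift_ub gr Ty.
  have h3 := dAtri b' b a.
  move: (dA01 b' a) => /andP[? ?].
  rewrite ge_min.
  case: (minP' (1 - dA b' a) (f y')) => [[hm hm']|[hm hm']]; rewrite hm' in h1;
    apply/orP; [left|right]; rewrite /g in h2; lra.
rewrite (lift_empty _ nT') in hfx.
rewrite ge_min; apply/orP; right; case/andP: LgT => ? _; lra.
Qed.

Lemma BT_D S T : BT D S T <= D S T.
Proof.
apply: BT_le; first by case/andP: (D01 S T).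
move=> g [[a [f [hf ->]]]|->].
  by have [hr hn] := clsh_Q hf; apply: nextop_Q.
have hr : range01 (fun _ : X => 1 : R) by move=> x; rewrite lexx ler01.
case: (pselect (exists y, T y)) => [[y Ty]|nT]; last exact: tsub_empty.
apply: tsub_le; first by case/andP: (D01 S T).
have := lift_ub hr Ty; have := lift_range S hr; case/andP: (D01 S T).
move=> ? ? /andP[? ?] ?; lra.
Qed.

Lemma dH_D S T : dH S T <= D S T.
Proof.
apply: le_from_above; first by case/andP: (dH_range S T).
move=> e he e1.
case: (leP 1 e) => [e1'|elt1]; first by apply: le_trans e1'; case/andP: (dH_range S T).
have e0 : 0 <= e by apply: le_trans (ltW he); case/andP: (D01 S T).
have hP := D_lt e1 he; apply: dH_le => // u Su.
have [x2 [x2' [t [Tx2 p2 ht hd]]]] := hP u u [::] Su (path_nil trans u).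
case: t p2 ht => [|b t] p2 ht /=; last by (simpl in ht; lra).
rewrite -(path_nilI p2) in hd; apply: le_trans hd.
apply: biginf_lb; last by exists x2.
by move=> y [w _ <-]; case/andP: (d001 u w).
Qed.

Lemma B0_D S T : B0 D S T <= D S T.
Proof. by rewrite /beta_d0 ge_max BT_D dH_D. Qed.

Lemma D_B0 S T : D S T <= B0 D S T.
Proof.
apply: le_from_above; first by case/andP: (D01 S T).
move=> e he e1.
have hBT : BT D S T < e by apply: le_lt_trans he; rewrite /beta_d0 le_max lexx.
have hdH : dH S T < e by apply: le_lt_trans he; rewrite /beta_d0 le_max lexx orbT.
have e0 : 0 <= e by apply: le_trans (ltW hdH); case/andP: (dH_range S T).
apply: D_le; first by rewrite e0 e1.
move=> x1 x1' s Sx p.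
case: s p => [|b s] p.
  rewrite -(path_nilI p); have [v Tv hv] := dH_lt e1 hdH Sx.
  exists v, v, [::]; split => //; [exact: path_nil | exact: ltW].
have [z [tr p']] := path_consI p.
have hz := step D_dpmet D_mono1 D_anti2 D_decomp (introT andP (conj e0 e1)) Sx tr hBT.
have hP := D_lt e1 hz.
have [y' [x2' [t [[y [b' [Ty tr' hb']]] p2 ht hd]]]] := hP z x1' s erefl p'.
exists y, x2', (b' :: t); split => //; first exact: path_cons tr' p2.
by rewrite /= ge_max dAsym hb' ht.
Qed.

Lemma D_fix : B0 D = D.
Proof.
apply: funext => S; apply: funext => T; apply/le_anti.
by rewrite B0_D D_B0.
Qed.

Lemma D_least d : is_dpmet d -> B0 d = d -> forall S T, D S T <= d S T.
Proof.
move=> hd hfix.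
have d01' : forall S T, 0 <= d S T <= 1 by case: hd.
have key : forall s e, 0 <= e <= 1 -> forall S T x1 x1', d S T < e -> S x1 ->
    pth x1 s x1' -> exists x2 x2' t,
      [/\ T x2, pth x2 t x2', dT s t <= e & d0 x1' x2' <= e].
  elim => [|b s IH] e /andP[e0 e1] S T x1 x1' hd' Sx p.
    rewrite -(path_nilI p).
    have [v Tv hv] := dH_lt e1 (le_lt_trans (fix_dH hfix S T) hd') Sx.
    exists v, v, [::]; split => //; [exact: path_nil | exact: ltW].
  have [z [tr p']] := path_consI p.
  have hz := step hd (fix_mono1 hfix) (fix_anti2 hfix) (fix_decomp hd hfix)
    (introT andP (conj e0 e1)) Sx tr (le_lt_trans (fix_BT hfix S T) hd').
  have [y' [x2' [t [[y [b' [Ty tr' hb']]] p2 ht hdd]]]] :=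
    IH e (introT andP (conj e0 e1)) _ _ z x1' hz erefl p'.
  exists y, x2', (b' :: t); split => //; first exact: path_cons tr' p2.
  by rewrite /= ge_max dAsym hb' ht.
move=> S T; apply: le_from_above; first by case/andP: (D01 S T).
move=> e he e1.
have e0 : 0 <= e by apply: le_trans (ltW he); case/andP: (d01' S T).
apply: D_le; first by rewrite e0 e1.
move=> x1 x1' s Sx p; apply: key Sx p => //; by rewrite e0 e1.
Qed.

End Main.

Unset Implicit Arguments.

Theorem mainTheorem5 (R : realType) (X A : Type)
  (trans : X -> A -> X -> Prop) (dA : A -> A -> R) (d0 : X -> X -> R) :
  is_metric01 dA -> is_dpmet d0 ->
  (exists d, is_lfp (beta_d0 trans dA d0) d) /\
  (forall d, is_lfp (beta_d0 trans dA d0) d ->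
     forall X1 X2 : set X, d X1 X2 = biginf (eps_set trans dA d0 X1 X2)).
Proof.
move=> hdA hd0.
have Dd := D_dpmet trans hdA hd0.
have Df := D_fix trans hdA hd0.
have Dl := @D_least _ _ _ trans _ _ hdA hd0.
split.
  exists (D trans dA d0); split => //; split => //.
move=> d [hd [hfix hl]] X1 X2.
apply/le_anti; rewrite (hl _ Dd Df) /=.
exact: Dl.
Qed.
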